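(* Let $\mathcal{L}=(L,\wedge,\vee,0,1)$ be a complete lattice in which $0$ is cocompact, and let $p\in L$ with $\Omega(p)\neq\emptyset$. Then $p$ is strongly irreducible in $L$ if and only if $p$ is a pseudo-complement of an atom $a$ of $L$. In this case every element of $L$ is comparable to $a$ or to $p$.
   Context: $p$ is strongly irreducible if for all $a,b\in L$: $a\wedge b\leq p$ implies $a\leq p$ or $b\leq p$. $\Omega(p)=\{x\in L\setminus\{0\}\mid p\wedge x=0\}$. An element $c$ is cocompact if whenever $\bigwedge A\leq c$ for a subset $A\subseteq L$ there is a finite $A'\subseteq A$ with $\bigwedge A'\leq c$. An atom is an element $a\neq 0$ with $[0,a]=\{0,a\}$. A pseudo-complement of $a$ is the greatest $x\in L$ with $a\wedge x=0$. *)

(* Defs.v *)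
From HB Require Import structures.
From mathcomp Require Import all_boot all_order.
Set Implicit Arguments. Unset Strict Implicit. Unset Printing Implicit Defensive.
Import Order.TTheory.
Local Open Scope order_scope.

Section Defs.
Context {d : Order.disp_t} {L : tbLatticeType d}.

Definition is_inf (A : L -> Prop) (x : L) : Prop :=
  (forall y, A y -> x <= y) /\ (forall z, (forall y, A y -> z <= y) -> z <= x).

Definition complete_lattice : Prop := forall A : L -> Prop, exists x, is_inf A x.

Definition cocompact (c : L) : Prop :=
  forall (A : L -> Prop) (x : L), is_inf A x -> x <= c ->
    exists s : seq L, (forall y, y \in s -> A y) /\ \meet_(y <- s) y <= c.

Definition strongly_irreducible (p : L) : Prop :=
  forall a b : L, a `&` b <= p -> a <= p \/ b <= p.

Definition Omega (p : L) : L -> Prop := fun x => x != \bot /\ p `&` x = \bot.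

Definition atom (a : L) : Prop :=
  a != \bot /\ forall x, \bot <= x <= a -> x = \bot \/ x = a.

Definition pseudo_complement_of (a p : L) : Prop :=
  a `&` p = \bot /\ forall x, a `&` x = \bot -> x <= p.

End Defs.

(* Main.v *)
Require Import Defs.
From HB Require Import structures.
From mathcomp Require Import all_boot all_order.
Import Order.TTheory.
Local Open Scope order_scope.

Lemma si_meet_seq (d : Order.disp_t) (L : tbLatticeType d) (p : L) (s : seq L) :
  strongly_irreducible p -> ~ (\top <= p) ->
  (forall y, y \in s -> ~ (y <= p)) -> ~ (\meet_(y <- s) y <= p).
Proof.
move=> SI Ht; elim: s => [|x s IH] H; first by rewrite big_nil.
rewrite big_cons => /SI [] Hx.
- by apply: (H x) => //; rewrite inE eqxx.
- by apply: IH Hx => y Hy; apply: H; rewrite inE Hy orbT.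
Qed.

Theorem corollary1p17 (d : Order.disp_t) (L : tbLatticeType d) (p : L) :
  complete_lattice (L := L) ->
  cocompact (\bot : L) ->
  (exists x : L, Omega p x) ->
  (strongly_irreducible p <-> exists a : L, atom a /\ pseudo_complement_of a p) /\
  (strongly_irreducible p ->
   forall a : L, atom a -> pseudo_complement_of a p ->
   forall x : L, (x <= a \/ a <= x) \/ (x <= p \/ p <= x)).
Proof.
move=> Hc Hcc [x0 [Hx0 Hpx0]].
have Ht : ~ (\top <= p).
  move=> Htp; have Hp : p = \top by apply/le_anti; rewrite Htp lex1.
  by move: Hpx0 Hx0; rewrite Hp meet1x => ->; rewrite eqxx.
have Om_nle : forall y, Omega p y -> ~ (y <= p).
  move=> y [Hy Hpy] Hyp; move: Hy; have : p `&` y = y by apply/meet_idPr.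
  by rewrite Hpy => <-; rewrite eqxx.
split; last first.
  move=> _ a [Ha Hat] [Hap Hpc] x.
  have [Hax|Hax] := Hat (a `&` x) (introT andP (conj (le0x _) (leIl _ _))).
    by right; left; apply: Hpc.
  by left; right; rewrite -Hax leIr.
split.
- move=> SI.
  have [m [Hm1 Hm2]] := Hc (Omega p).
  have Hm0 : m != \bot.
    apply/negP => /eqP Hm.
    have Hmb : m <= \bot by rewrite Hm.
    have [s [Hs Hsm]] := Hcc (Omega p) m (conj Hm1 Hm2) Hmb.
    apply: (@si_meet_seq _ _ p s SI Ht).
      by move=> y /Hs; apply: Om_nle.
    by apply: le_trans Hsm (le0x _).
  have Hpm : p `&` m = \bot.
    apply/eqP; rewrite -lex0 -Hpx0; apply: leI2 => //; exact: Hm1.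
  have Hmp : m `&` p = \bot by rewrite meetC.
  exists m; split; [split => // y /andP [_ Hy]|split => //].
  + case: (eqVneq y \bot) => Hy0; first by left.
    right; apply/le_anti; rewrite Hy /=; apply: Hm1; split => //.
    apply/eqP; rewrite -lex0 -Hpm; apply: leI2 => //.
  + move=> x Hmx.
    have : m `&` x <= p by rewrite Hmx le0x.
    case/SI => // Hmp'; move: Hm0; have : m `&` p = m by apply/meet_idPl.
    by rewrite Hmp => <-; rewrite eqxx.
- move=> [a [[Ha Hat] [Hap Hpc]]] x y Hxy.
  case: (boolP (x <= p)) => Hx; first by left.
  case: (boolP (y <= p)) => Hy; first by right.
  have Hax : a <= x.
    have [H|H] := Hat (a `&` x) (introT andP (conj (le0x _) (leIl _ _))).
      by rewrite (Hpc _ H) in Hx.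
    by rewrite -H leIr.
  have Hay : a <= y.
    have [H|H] := Hat (a `&` y) (introT andP (conj (le0x _) (leIl _ _))).
      by rewrite (Hpc _ H) in Hy.
    by rewrite -H leIr.
  have Hapl : a <= p by apply: le_trans Hxy; rewrite lexI Hax Hay.
  move: Ha; have : a `&` p = a by apply/meet_idPl.
  by rewrite Hap => <-; rewrite eqxx.
Qed.
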